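(* Let $m\ge 3$, $H=B(l_1,\ldots,l_m)$ and $G=H^2$. Then $G$ is equitably $(m+1)$-choosable.
   Context: All graphs are finite and simple. For $m,l_1,\ldots,l_m\in\mathbb{N}$ with $l_1\le\cdots\le l_m$, $B(l_1,\ldots,l_m)$ is the graph with vertex set $\{u\}\cup\{v_{i,j}: i\in[m], j\in[l_i]\}$ in which, for each $i\in[m]$, consecutive vertices in the sequence $u, v_{i,1},\ldots,v_{i,l_i}$ are adjacent (and there are no other edges). For a graph $H$, $H^2$ has vertex set $V(H)$ with two vertices adjacent iff their distance in $H$ is 1 or 2. A $k$-assignment $L$ assigns to each vertex a set of exactly $k$ colors; an equitable $L$-coloring of $G$ is a proper coloring $f$ with $f(v)\in L(v)$ such that no color is used more than $\lceil |V(G)|/k\rceil$ times; $G$ is equitably $k$-choosable if it has an equitable $L$-coloring for every $k$-assignment $L$. *)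

(* Defs.v *)
From mathcomp Require Import all_boot.
Set Implicit Arguments. Unset Strict Implicit. Unset Printing Implicit Defensive.

(* A simple graph is a finite type V with a symmetric irreflexive rel. *)

Definition graph_sq (V : finType) (e : rel V) : rel V :=
  fun x y => (x != y) && (e x y || [exists z, e x z && e z y]).

Definition ceil_div (n k : nat) : nat := (n + k.-1) %/ k.

Definition equitable_L_coloring (V : finType) (e : rel V) (k : nat)
    (C : finType) (L : V -> {set C}) (f : V -> C) : Prop :=
  [/\ forall x y, e x y -> f x != f y,
      forall v, f v \in L v &
      forall c, #|[set v | f v == c]| <= ceil_div #|V| k].

Definition equitably_choosable (V : finType) (e : rel V) (k : nat) : Prop :=
  forall (C : finType) (L : V -> {set C}),
    (forall v, #|L v| = k) ->
    exists f : V -> C, equitable_L_coloring e k L f.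

(* The spider B(l_1,...,l_m): vertex None is u; Some (existT i j) is
   v_{i+1, j+1} (0-based indices i : 'I_m, j : 'I_(l i)). *)
Definition Bvert (m : nat) (l : 'I_m -> nat) : finType :=
  option {i : 'I_m & 'I_(l i)}.

Definition Bedge (m : nat) (l : 'I_m -> nat) : rel (Bvert l) :=
  fun x y =>
    match x, y with
    | None, None => false
    | None, Some q => val (tagged q) == 0
    | Some p, None => val (tagged p) == 0
    | Some p, Some q =>
        (tag p == tag q) &&
        (((val (tagged p)).+1 == val (tagged q)) ||
         ((val (tagged q)).+1 == val (tagged p)))
    end.

(* Main.v *)
Require Import Defs.
From mathcomp Require Import all_boot.
From mathcomp Require Import zify.
Set Implicit Arguments. Unset Strict Implicit. Unset Printing Implicit Defensive.

Section Generic.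
Variables (V : finType) (e : rel V) (k q : nat) (b w : V -> nat).
Hypothesis irr : forall x, ~~ e x x.
Hypothesis bq : forall x, b x < q.
Hypothesis qle : q <= ceil_div #|V| k.
Hypothesis Hw : forall x, #|[set y | (e x y || e y x) && (b y < b x)]| <= w x.
Hypothesis Hb : forall x, #|[set y | (b y == b x) && (w x <= w y)]| + w x <= k.

Let wk x : w x < k.
Proof.
have := Hb x.
have : x \in [set y | (b y == b x) && (w x <= w y)] by rewrite inE eqxx leqnn.
move=> Hx; have : 0 < #|[set y | (b y == b x) && (w x <= w y)]| by apply/card_gt0P; exists x.
lia.
Qed.

Let N := #|V|.
Let A x := b x * k.+1 + (k - w x).
Let key x := A x * N + enum_rank x.

Let key_inj : injective key.
Proof.
move=> x y H.
have : (key x %% N) = (key y %% N) by rewrite H.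
rewrite /key !modnMDl !modn_small; try exact: ltn_ord.
by move/val_inj/enum_rank_inj.
Qed.

Let key_lt x y : key y < key x -> b y < b x \/ (b y = b x /\ w x <= w y).
Proof.
move=> H.
have HA : A y <= A x.
  rewrite leqNgt; apply/negP => Hlt.
  have h1 : (A x).+1 * N <= A y * N by rewrite leq_mul2r Hlt orbT.
  have h2 : enum_rank x < N by exact: ltn_ord.
  move: H; rewrite /key; rewrite mulSn in h1; lia.
move: HA; rewrite /A.
have := wk x; have := wk y.
case: (ltngtP (b y) (b x)) => Hb'.
- by left.
- move=> _ _ HA; exfalso.
  have : (b x).+1 * k.+1 <= b y * k.+1 by rewrite leq_mul2r Hb' orbT.
  rewrite mulSn; lia.
- move=> ? ? HA; right; split => //; rewrite Hb' in HA; lia.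
Qed.

Lemma GL : equitably_choosable e k.
Proof.
move=> C L HL.
case: (pickP (fun _ : V => true)) => [v0 _|V0]; last first.
  have f : V -> C by move=> v; have := V0 v.
  exists f; split.
  - by move=> x; have := V0 x.
  - by move=> x; have := V0 x.
  - move=> c; rewrite (_ : [set v | f v == c] = set0) ?cards0 //.
    by apply/setP => v; have := V0 v.
have : 0 < #|L v0| by rewrite HL; have := wk v0; lia.
case/card_gt0P => c0 _.
pose good (f : V -> C) n := forall x, key x < n -> f x \in L x /\
   forall y, key y < key x -> (e x y || e y x || (b y == b x)) -> f x != f y.
have main : forall n, exists f, good f n.
  elim=> [|n [f Hf]]; first by exists (fun _ => c0).
  case: (pickP (fun x => key x == n)) => [x /eqP Hx|Hnone]; last first.
    exists f => v Hv; apply: Hf.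
    have := Hnone v; rewrite /= => /negbT/eqP; lia.
  pose F := [set y | (key y < key x) && (e x y || e y x || (b y == b x))].
  pose AA := [set y | (e x y || e y x) && (b y < b x)].
  pose BB := [set y | (b y == b x) && (w x <= w y)].
  have sF : F \subset AA :|: (BB :\ x).
    apply/subsetP => y; rewrite !inE => /andP [Hk Hc].
    case: (key_lt Hk) => [Hlt| [Heq Hle]].
      apply/orP; left; move: Hc; rewrite Hlt andbT.
      by case/orP => // /eqP Hbe; rewrite Hbe ltnn in Hlt.
    apply/orP; right; rewrite Heq eqxx Hle andbT /= andbT.
    by apply/eqP => Hyx; rewrite Hyx ltnn in Hk.
  have cF : #|F| < k.
    have h1 := subset_leq_card sF.
    have h2 := cardsU AA (BB :\ x).
    have h3 := cardsD1 x BB.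
    have h4 : x \in BB by rewrite inE eqxx leqnn.
    have h5 := Hw x. have h6 := Hb x. rewrite h4 in h3.
    rewrite -/AA -/BB in h5 h6.
    lia.
  have cfF : #|[set f y | y in F]| < #|L x| by rewrite HL; exact: leq_ltn_trans (leq_imset_card _ _) cF.
  have : 0 < #|L x :\: [set f y | y in F]|.
    have := cardsID [set f y | y in F] (L x).
    have := subset_leq_card (subsetIr (L x) [set f y | y in F]).
    lia.
  case/card_gt0P => c; rewrite inE => /andP [HcF HcL].
  exists (fun v => if v == x then c else f v) => v Hv.
  case: (eqVneq v x) => [->|Hvx].
    split => // y Hy Hc; rewrite (_ : (y == x) = false); last first.
      by apply/negbTE/eqP => Hyx; rewrite Hyx ltnn in Hy.
    apply/eqP => Hcf; move: HcF; rewrite Hcf; apply/negP/negPn.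
    by apply: imset_f; rewrite inE Hy Hc.
  have Hvn : key v < n.
    have : key v != key x by apply/eqP => /key_inj; apply/eqP.
    rewrite Hx; lia.
  have [HL1 HL2] := Hf v Hvn.
  split => // y Hy Hc.
  rewrite (_ : (y == x) = false); first exact: HL2.
  apply/negbTE/eqP => Hyx; rewrite Hyx Hx in Hy; lia.
have [f Hf] := main (\max_x key x).+1.
have Hf' x := Hf x (@leq_bigmax _ key x).
exists f; split.
- move=> x y Hxy.
  have Hne : x != y by apply/eqP => Hxy'; rewrite Hxy' in Hxy; move: (irr y); rewrite Hxy.
  have Hk : key x != key y by apply/eqP => /key_inj; apply/eqP.
  case: (ltngtP (key x) (key y)) => Hk'.
  + have := (Hf' y).2 x Hk'; rewrite Hxy orbT /= => /(_ isT).
    by rewrite eq_sym.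
  + by apply: (Hf' x).2 => //; rewrite Hxy.
  + by rewrite Hk' eqxx in Hk.
- by move=> x; apply: (Hf' x).1.
- move=> c; apply: leq_trans qle.
  pose g (v : V) : 'I_q := Ordinal (bq v).
  rewrite -(card_in_imset (f := g)); first by apply: leq_trans (max_card _) _; rewrite card_ord.
  move=> x y; rewrite !inE => /eqP Hx /eqP Hy /(congr1 val) /= Hbxy.
  apply/eqP/negPn/negP => Hne.
  have Hk : key x != key y by apply/eqP => /key_inj; apply/eqP.
  case: (ltngtP (key x) (key y)) => Hk'.
  + have := (Hf' y).2 x Hk'; rewrite Hbxy eqxx !orbT /= => /(_ isT).
    by rewrite Hx Hy eqxx.
  + have := (Hf' x).2 y Hk'; rewrite Hbxy eqxx !orbT /= => /(_ isT).
    by rewrite Hx Hy eqxx.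
  + by rewrite Hk' eqxx in Hk.
Qed.
End Generic.

Section Adj.
Variables (m : nat) (l : 'I_m -> nat).
Local Notation V := (Bvert l).
Local Notation E := (graph_sq (@Bedge m l)).

Definition adjspec (x y : V) : Prop :=
  match x, y with
  | None, None => False
  | None, Some q => val (tagged q) <= 1
  | Some p, None => val (tagged p) <= 1
  | Some p, Some q => (tag p = tag q /\ val (tagged p) <= val (tagged q) + 2 /\
                       val (tagged q) <= val (tagged p) + 2)
                      \/ (val (tagged p) = 0 /\ val (tagged q) = 0)
  end.

Lemma adj_cases (x y : V) : E x y -> adjspec x y.
Proof.
rewrite /graph_sq => /andP [Hne /orP [H | /existsP [z /andP [H1 H2]]]].
- case: x y Hne H => [p|] [q|] //= Hne.
  + case/andP => /eqP Ht /orP [/eqP|/eqP] Hd; left; split => //; lia.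
  + by move/eqP => ->.
  + by move/eqP => ->.
- case: x y z Hne H1 H2 => [p|] [q|] [r|] //= Hne.
  + case/andP => /eqP Ht1 /orP [/eqP|/eqP] Hd1;
    case/andP => /eqP Ht2 /orP [/eqP|/eqP] Hd2; left; split; try congruence; lia.
  + by move=> /eqP H1 /eqP H2; right.
  + case/andP => /eqP Ht1 /orP [/eqP|/eqP] Hd1 /eqP Hd2; lia.
  + move=> /eqP Hd1; case/andP => /eqP Ht2 /orP [/eqP|/eqP] Hd2; lia.
Qed.

Lemma Bedge_sym (x y : V) : Bedge x y = Bedge y x.
Proof.
case: x y => [p|] [q|] //=.
by rewrite eq_sym orbC.
Qed.

Lemma E_sym (x y : V) : E x y = E y x.
Proof.
rewrite /graph_sq eq_sym Bedge_sym; congr (_ && (_ || _)).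
apply: eq_existsb => z; by rewrite andbC !(Bedge_sym z).
Qed.

Lemma E_irr (x : V) : ~~ E x x.
Proof. by rewrite /graph_sq eqxx. Qed.

Lemma card_V : #|V| = (\sum_(i < m) l i).+1.
Proof.
rewrite /Bvert card_option card_tagged sumnE big_map big_enum /=.
congr (_.+1); apply: eq_bigr => i _; exact: card_ord.
Qed.

Lemma sig_eq (p q : {i : 'I_m & 'I_(l i)}) :
  tag p = tag q -> val (tagged p) = val (tagged q) -> p = q.
Proof.
case: p => i j; case: q => i' j' /= Hi; subst i' => Hj.
by rewrite (val_inj Hj).
Qed.
End Adj.

Section Pre.
Variables (m : nat) (l : 'I_m -> nat).
Definition pre (t : nat) := \sum_(j < m | j < t) l j.

Lemma sum_sub (Q1 Q2 : pred 'I_m) : (forall j, Q1 j -> Q2 j) ->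
  \sum_(j < m | Q1 j) l j <= \sum_(j < m | Q2 j) l j.
Proof.
move=> H; rewrite [X in X <= _]big_mkcond [X in _ <= X]big_mkcond /=.
apply: leq_sum => j _; case HQ: (Q1 j); first by rewrite (H _ HQ).
by [].
Qed.

Lemma pre_S (i : 'I_m) : pre i.+1 = pre i + l i.
Proof.
rewrite /pre (bigD1 i) //= addnC; congr (_ + _).
apply: eq_bigl => j; rewrite ltnS; case: (eqVneq j i) => [->|Hji]; first by rewrite ltnn andbF.
rewrite andbT leq_eqVlt.
have -> : (nat_of_ord j == nat_of_ord i) = false by apply/negbTE.
by [].
Qed.

Lemma pre_mono t t' : t <= t' -> pre t <= pre t'.
Proof. move=> H; apply: sum_sub => j Hj; exact: leq_trans Hj H. Qed.

Lemma pre_le (i : 'I_m) t : i < t -> pre i + l i <= pre t.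
Proof. by move=> H; rewrite -pre_S; apply: pre_mono. Qed.

Lemma pre_all : pre m = \sum_(j < m) l j.
Proof. by apply: eq_bigl => j; rewrite ltn_ord. Qed.

Lemma pre0 : pre 0 = 0.
Proof. by rewrite /pre big_pred0. Qed.
End Pre.

Section Pos.
Variables (m : nat) (l : 'I_m -> nat).
Local Notation V := (Bvert l).
Local Notation E := (graph_sq (@Bedge m l)).
Variables (a b : 'I_m) (P : 'I_m -> nat).
Hypothesis Hab : a != b.
Hypothesis Hl : forall i, 0 < l i.
Definition app (i : 'I_m) := (i != a) && (i != b).
Hypothesis HP1 : forall i, app i -> l a + l b < P i.
Hypothesis HP2 : forall i i', app i -> app i' -> i < i' -> P i + l i <= P i'.
Hypothesis HP3 : forall i, app i -> P i + l i <= (\sum_(i < m) l i).+1.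

Definition pos (x : V) : nat :=
  match x with
  | None => l a
  | Some p => if tag p == a then l a - (val (tagged p)).+1
              else if tag p == b then l a + (val (tagged p)).+1
              else P (tag p) + val (tagged p)
  end.

Lemma sum_ab : \sum_(i < m) l i = l a + l b + \sum_(i < m | app i) l i.
Proof.
rewrite (bigD1 a) //= (bigD1 b) /=; last by rewrite eq_sym.
by rewrite addnA.
Qed.

Lemma posS i (j : 'I_(l i)) :
  pos (Some (existT _ i j)) =
  if i == a then l a - j.+1 else if i == b then l a + j.+1 else P i + j.
Proof. by []. Qed.

Lemma pos_inj : injective pos.
Proof.
have Hb := Hl b.
case=> [[i j]|] [[i' j']|] //=; rewrite ?posS.
- have Hj := ltn_ord j; have Hj' := ltn_ord j'.
  case Ha: (i == a); case Ha': (i' == a).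
  + move=> H; congr Some; apply: sig_eq => /=; first by rewrite (eqP Ha) (eqP Ha').
    have := congr1 l (eqP Ha); have := congr1 l (eqP Ha'); lia.
  + case Hb': (i' == b) => H.
    * have := congr1 l (eqP Ha); lia.
    * have := HP1 (i := i'); rewrite /app Ha' Hb' => /(_ isT). have := congr1 l (eqP Ha); lia.
  + case Hb1: (i == b) => H.
    * have := congr1 l (eqP Ha'); lia.
    * have := HP1 (i := i); rewrite /app Ha Hb1 => /(_ isT). have := congr1 l (eqP Ha'); lia.
  + case Hb1: (i == b); case Hb': (i' == b) => H.
    * congr Some; apply: sig_eq => /=; first by rewrite (eqP Hb1) (eqP Hb').
      lia.
    * have := HP1 (i := i'); rewrite /app Ha' Hb' => /(_ isT). have := congr1 l (eqP Hb1); lia.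
    * have := HP1 (i := i); rewrite /app Ha Hb1 => /(_ isT). have := congr1 l (eqP Hb'); lia.
    * have hi : app i by rewrite /app Ha Hb1.
      have hi' : app i' by rewrite /app Ha' Hb'.
      case: (ltngtP i i') => Hii'.
      -- have := HP2 hi hi' Hii'; lia.
      -- have := HP2 hi' hi Hii'; lia.
      -- have Hii : i = i' by apply: val_inj.
         congr Some; apply: sig_eq => //=; have := congr1 P Hii; lia.
- have Hj := ltn_ord j.
  case Ha: (i == a); first by have := congr1 l (eqP Ha); lia.
  case Hb1: (i == b) => H; first lia.
  have := HP1 (i := i); rewrite /app Ha Hb1 => /(_ isT); lia.
- have Hj := ltn_ord j'.
  case Ha: (i' == a); first by have := congr1 l (eqP Ha); lia.
  case Hb1: (i' == b) => H; first lia.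
  have := HP1 (i := i'); rewrite /app Ha Hb1 => /(_ isT); lia.
Qed.


Lemma pos_lt x : pos x < #|V|.
Proof.
rewrite card_V sum_ab ltnS.
case: x => [[i j]|] /=; last lia.
have Hj := ltn_ord j.
case Ha: (i == a); first lia.
case Hb1: (i == b); first by have := congr1 l (eqP Hb1); lia.
have hi : app i by rewrite /app Ha Hb1.
have := HP3 hi; rewrite sum_ab /=; lia.
Qed.

Lemma card_pos (Q : pred V) (s : seq nat) :
  (forall y, Q y -> pos y \in s) -> #|[set y | Q y]| <= size s.
Proof.
move=> HQ; rewrite cardE -(size_map pos).
apply: uniq_leq_size; first by rewrite (map_inj_uniq pos_inj) enum_uniq.
move=> t /mapP [y]; rewrite mem_enum inE => Hy ->; exact: HQ.
Qed.

Definition isK (x : V) := if x is Some p then val (tagged p) == 0 else true.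
Definition appS (x : V) := if x is Some p then app (tag p) && (val (tagged p) == 0) else false.
Definition appT (x : V) := if x is Some p then app (tag p) && (val (tagged p) == 1) else false.

Let k := m.+1.
Definition Cx (x : V) := pos x %/ k * k.

Definition w (x : V) : nat :=
  if appS x then #|[set y | isK y && (pos y < Cx x)]|
  else if appT x then (l a < Cx x) + (pos x == Cx x)
  else (0 < Cx x) * ((pos x == Cx x) + (pos x <= (Cx x).+1)).

Lemma nbr_appS x y : appS x -> E x y -> pos y < pos x -> isK y.
Proof.
case: x => [[i j]|] //=; rewrite /= => /andP [/andP [Ha Hb1] /eqP Hj0].
case: y => [[i' j']|] //= /adj_cases /=.
case=> [[Hi [H1 H2]]|[H1 H2]]; last by rewrite H2.
move: Hi => /= Hi.
have Ha' : (i' == a) = false by rewrite -Hi (negbTE Ha).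
have Hb' : (i' == b) = false by rewrite -Hi (negbTE Hb1).
rewrite /pos /= Ha' Hb' (negbTE Ha) (negbTE Hb1); have := congr1 P Hi; lia.
Qed.

Lemma nbr_appT x y : appT x -> E x y -> pos y < pos x -> pos y = l a \/ pos y = (pos x).-1.
Proof.
case: x => [[i j]|] //=; rewrite /= => /andP [/andP [Ha Hb1] /eqP Hj0].
case: y => [[i' j']|] /adj_cases //=; last by left.
case=> [[Hi [H1 H2]]|[H1 H2]] //; last lia.
move: Hi => /= Hi.
have Ha' : (i' == a) = false by rewrite -Hi (negbTE Ha).
have Hb' : (i' == b) = false by rewrite -Hi (negbTE Hb1).
rewrite /pos /= Ha' Hb' (negbTE Ha) (negbTE Hb1) => H; have := congr1 P Hi; right; lia.
Qed.

Lemma nbr_path x y : ~~ appS x -> ~~ appT x -> E x y -> pos y < pos x ->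
  pos y = (pos x).-1 \/ pos y = (pos x).-2.
Proof.
have Hlb := Hl b; have Hla := Hl a.
case: x => [[i j]|] /=.
- rewrite /pos /= => HS HT /adj_cases.
  have Hj := ltn_ord j.
  case: y => [[i' j']|] /=.
  + rewrite /pos /= => HH.
    have Hj' := ltn_ord j'.
    case: HH => [[Hi [H1 H2]]|[H1 H2]].
    * move: Hi => /= Hi.
      have HPi := congr1 P Hi; have Hli := congr1 l Hi.
      have Ea : (i' == a) = (i == a) by rewrite Hi.
      have Eb : (i' == b) = (i == b) by rewrite Hi.
      rewrite Ea Eb.
      case Ha: (i == a) => /=; first by have := congr1 l (eqP Ha); lia.
      case Hb1: (i == b) => /=; first lia.
      rewrite /app Ha Hb1 /= in HS HT. lia.
    * case Ha: (i == a); case Ha': (i' == a) => /=.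
      -- have := congr1 l (eqP Ha); have := congr1 l (eqP Ha'); lia.
      -- case Hb': (i' == b) => /=; first lia.
         have := HP1 (i := i'); rewrite /app Ha' Hb' => /(_ isT); lia.
      -- case Hb1: (i == b) => /=; first lia.
         rewrite /app Ha Hb1 /= in HS; by rewrite H1 eqxx in HS.
      -- case Hb1: (i == b) => /=; last by rewrite /app Ha Hb1 /= H1 eqxx in HS.
         case Hb': (i' == b) => /=; first lia.
         have := HP1 (i := i'); rewrite /app Ha' Hb' => /(_ isT); lia.
  + move=> Hj1.
    case Ha: (i == a); first lia.
    case Hb1: (i == b); first lia.
    rewrite /app Ha Hb1 /= in HS HT; lia.
- move=> _ _ /adj_cases; case: y => [[i' j']|] //=.
  rewrite /pos /= => Hj1.
  have Hj' := ltn_ord j'.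
  case Ha': (i' == a); first by have := congr1 l (eqP Ha'); lia.
  case Hb': (i' == b); first lia.
  have := HP1 (i := i'); rewrite /app Ha' Hb' => /(_ isT); lia.
Qed.


Lemma k_gt0 : 0 < k. Proof. by []. Qed.

Lemma Cx_le x : Cx x <= pos x.
Proof. exact: leq_trunc_div. Qed.

Lemma pos_gt0_app x : appS x || appT x -> 0 < pos x.
Proof.
case: x => [[i j]|] //= /orP [] /andP [/andP [Ha Hb1] _];
rewrite /pos /= (negbTE Ha) (negbTE Hb1);
have := HP1 (i := i); rewrite /app Ha Hb1 => /(_ isT); lia.
Qed.

Lemma out_le_w x :
  #|[set y | (E x y || E y x) && (pos y %/ k < pos x %/ k)]| <= w x.
Proof.
have HC := Cx_le x.
apply: (@leq_trans #|[set y | E x y && (pos y < Cx x)]|).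
  apply: subset_leq_card; apply/subsetP => y; rewrite !inE (E_sym y x) orbb.
  by rewrite ltn_divLR.
rewrite /w; case HS: (appS x).
  apply: subset_leq_card; apply/subsetP => y; rewrite !inE => /andP [Hxy Hy].
  rewrite Hy andbT; apply: (nbr_appS HS Hxy); lia.
case HT: (appT x).
  have Hp := pos_gt0_app (introT orP (or_intror HT)).
  apply: leq_trans (card_pos (s := [seq t <- [:: l a; (pos x).-1] | t < Cx x]) _) _.
    move=> y /andP [Hxy Hy]; rewrite mem_filter Hy /=.
    by case: (nbr_appT HT Hxy (leq_trans Hy HC)) => ->; rewrite !inE eqxx ?orbT.
  rewrite size_filter /=; lia.
apply: leq_trans (card_pos (s := [seq t <- [:: (pos x).-1; (pos x).-2] | t < Cx x]) _) _.
  move=> y /andP [Hxy Hy]; rewrite mem_filter Hy /=.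
  by case: (nbr_path (negbT HS) (negbT HT) Hxy (leq_trans Hy HC)) => ->; rewrite !inE eqxx ?orbT.
rewrite size_filter /=; lia.
Qed.


Lemma w_le2 x : ~~ appS x -> w x <= 2.
Proof.
move=> HS; rewrite /w (negbTE HS); case: (appT x); lia.
Qed.

Lemma chunk_bounds x y : pos y %/ k == pos x %/ k -> Cx x <= pos y < Cx x + k.
Proof.
move/eqP => H; rewrite /Cx -H; apply/andP; split; first exact: leq_trunc_div.
by rewrite addnC -mulSn -ltn_divLR.
Qed.

Lemma card_K : #|[set y : V | isK y]| <= m.+1.
Proof.
pose g (y : V) : option 'I_m := omap (fun p => tag p) y.
rewrite -(card_in_imset (f := g)).
  by apply: leq_trans (max_card _) _; rewrite card_option card_ord.
move=> [p|] [q|] //; rewrite !inE /= => Hp Hq [Ht].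
congr Some; apply: sig_eq => //; exact: (etrans (eqP Hp) (esym (eqP Hq))).
Qed.

Lemma Hb_of
  (H1 : forall x, w x = 1 -> #|[set y | (pos y %/ k == pos x %/ k) && (1 <= w y)]| <= m)
  (H2 : forall x, w x = 2 -> #|[set y | (pos y %/ k == pos x %/ k) && (2 <= w y)]| <= m.-1) x :
  #|[set y | (pos y %/ k == pos x %/ k) && (w x <= w y)]| + w x <= k.
Proof.
case Hw0: (w x) => [|[|[|n]]].
- rewrite addn0; apply: leq_trans (card_pos (s := iota (Cx x) k) _) _; last by rewrite size_iota.
  move=> y /andP [Hy _]; rewrite mem_iota; exact: chunk_bounds.
- have := H1 x Hw0; rewrite /k; lia.
- have := H2 x Hw0; have := ltn_ord a; rewrite /k; lia.
- have HS : appS x.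
    apply/negPn/negP => HS; have := w_le2 HS; lia.
  set A := [set y | isK y && (pos y < Cx x)].
  have HwA : w x = #|A| by rewrite /w HS.
  have A3 : 3 <= #|A| by rewrite -HwA Hw0.
  rewrite -Hw0 HwA.
  set B := [set y | (pos y %/ k == pos x %/ k) && (#|A| <= w y)].
  set K2 := [set y | isK y && (pos y %/ k == pos x %/ k)].
  have sB : B \subset K2.
    apply/subsetP => y; rewrite !inE => /andP [Hy Hwy]; rewrite Hy andbT.
    case HSy : (appS y); first by move: HSy; case: y {Hy Hwy} => [[i j]|] //= /andP [_ ->].
    have := w_le2 (negbT HSy); lia.
  have dis : A :&: K2 = set0.
    apply/setP => y; rewrite !inE.
    apply/negP => /andP [/andP [_ Hy1] /andP [_ Hy2]].
    have := chunk_bounds Hy2; lia.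
  have sU : A :|: K2 \subset [set y | isK y].
    apply/subsetP => y; rewrite !inE; by case/orP => /andP [->].
  have := cardsU A K2; rewrite dis cards0 subn0 => HU.
  have := subset_leq_card sU; have := card_K; have := subset_leq_card sB.
  rewrite /k; lia.
Qed.


Lemma chunk_of_bounds x p : Cx x <= p < Cx x + k -> p %/ k = pos x %/ k.
Proof.
rewrite /Cx => /andP [H1 H2].
have Hr : p - pos x %/ k * k < k by move: H1 H2; generalize (pos x %/ k * k); intros; lia.
have -> : p = pos x %/ k * k + (p - pos x %/ k * k) by move: H1; generalize (pos x %/ k * k); intros; lia.
by rewrite divnMDl // (divn_small Hr) addn0.
Qed.

Lemma chunk_Cx x y : pos y %/ k == pos x %/ k -> Cx y = Cx x.
Proof. by rewrite /Cx => /eqP ->. Qed.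

Lemma L1 y : 1 <= w y -> ~~ appS y -> ~~ appT y -> pos y <= (Cx y).+1.
Proof. move=> H HS HT; move: H; rewrite /w (negbTE HS) (negbTE HT); lia. Qed.

Lemma L2 y : 2 <= w y -> ~~ appS y -> pos y = Cx y.
Proof.
move=> H HS; have := Cx_le y; move: H; rewrite /w (negbTE HS); case: (appT y); lia.
Qed.

Lemma L3 y : 1 <= w y -> 0 < Cx y.
Proof.
rewrite /w; case: (appS y).
  case/card_gt0P => z; rewrite inE => /andP [_]; lia.
have := Cx_le y.
case HT: (appT y); last lia.
have := pos_gt0_app (introT orP (or_intror HT)); lia.
Qed.

Lemma appST_shape y : appS y || appT y ->
  exists i (j : 'I_(l i)), [/\ y = Some (existT _ i j), app i, val j <= 1 & pos y = P i + j].
Proof.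
case: y => [[i j]|] //= /orP [] /andP [Ha /eqP Hj]; exists i, j;
(split => //; [lia | move: Ha; rewrite /app /pos /= => /andP [/negbTE -> /negbTE ->] //]).
Qed.

Lemma K_split C :
  #|[set y | isK y && (pos y < C)]| + #|[set y | isK y && (C <= pos y)]| <= m.+1.
Proof.
set A := [set y | isK y && (pos y < C)].
set K2 := [set y | isK y && (C <= pos y)].
have dis : A :&: K2 = set0.
  apply/setP => y; rewrite !inE.
  apply/negP => /andP [/andP [_ Hy1] /andP [_ Hy2]]; lia.
have sU : A :|: K2 \subset [set y | isK y].
  apply/subsetP => y; rewrite !inE; by case/orP => /andP [->].
have := cardsU A K2; rewrite dis cards0 subn0 => HU.
have := subset_leq_card sU; have := card_K; lia.
Qed.


Lemma Cx_ge x : 0 < Cx x -> k <= Cx x.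
Proof.
rewrite /Cx => H; have : 0 < pos x %/ k by move: H; case: (pos x %/ k).
move=> H'; exact: leq_pmull.
Qed.

Lemma card_le_U (A B : {set V}) : #|A :|: B| <= #|A| + #|B|.
Proof. rewrite cardsU; lia. Qed.

Lemma H2_big (Hm : 3 <= m) (Hab' : l a <= l b) x : w x = 2 ->
  #|[set y | (pos y %/ k == pos x %/ k) && (2 <= w y)]| <= m.-1.
Proof.
move=> Hwx.
set C := Cx x.
have C0 : 0 < C by apply: L3; rewrite Hwx.
have Ck := Cx_ge C0.
set S2 := [set y | _ && _].
have HS2 y : y \in S2 -> [/\ C <= pos y < C + k & appS y \/ pos y = C].
  rewrite inE => /andP [Hy Hwy]; split; first exact: chunk_bounds.
  case HS: (appS y); [by left | right].
  have := chunk_Cx Hy; rewrite -/C => <-; by apply: L2 => //; rewrite HS.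
case: (ltnP (l a).+1 C) => HlaC.
- set K2 := [set y | isK y && (C <= pos y)].
  set A := [set y | isK y && (pos y < C)].
  have A3 : 3 <= #|A|.
    pose s0 : V := Some (existT _ a (Ordinal (Hl a))).
    pose s1 : V := Some (existT _ b (Ordinal (Hl b))).
    have sub : None |: (s0 |: [set s1]) \subset A.
      have Hba : (b == a) = false by rewrite eq_sym; apply/negbTE.
      apply/subsetP => y; rewrite !inE => /orP [|/orP []] /eqP ->;
      rewrite /= /pos /= ?eqxx ?Hba /=; lia.
    apply: leq_trans (subset_leq_card sub).
    rewrite !cardsU1 cards1 !inE /=.
    have -> : (s0 == s1) = false.
      apply/negbTE/eqP => Heq.
      have H := congr1 (fun o : V => if o is Some p then tag p else a) Heq.
      by rewrite /= in H; move: Hab; rewrite H eqxx.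
    by [].
  have := K_split C; rewrite -/A -/K2 => HK.
  have sub : S2 \subset [set y | pos y == C] :|: K2.
    apply/subsetP => y Hy; have [/andP [Hy1 Hy2] [HS|Hp]] := HS2 y Hy; rewrite !inE; last by rewrite Hp eqxx.
    apply/orP; right; rewrite Hy1 andbT.
    by move: HS; case: y {Hy Hy1 Hy2} => [[i j]|] //= /andP [_ ->].
  have h1 : #|[set y | pos y == C]| <= 1.
    by apply: (card_pos (s := [:: C])) => y /eqP ->; rewrite inE.
  have := subset_leq_card sub; have := card_le_U [set y | pos y == C] K2.
  lia.
- apply: leq_trans (card_pos (s := [:: C; C + m]) _) _; last by rewrite /=; lia.
  move=> y Hy; have Hy' : y \in S2 by rewrite inE.
  have [/andP [Hy1 Hy2] [HS|Hp0]] := HS2 y Hy'; last by rewrite Hp0 !inE eqxx.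
  have HST : appS y || appT y by rewrite HS.
  have [i [j [Hyij Hi Hj Hp]]] := appST_shape HST.
  have Hj0 : val j = 0 by move: HS; rewrite Hyij /= => /andP [_ /eqP].
  rewrite !inE; apply/orP; right; apply/eqP.
  have := HP1 Hi; move: Hy2; rewrite /k Hp; lia.
Qed.


Lemma pos_big (Ha0 : nat_of_ord a = 0) (Hb1 : nat_of_ord b = 1)
  (HPd : forall i, app i -> P i = (pre l i).+1) i (j : 'I_(l i)) :
  0 < nat_of_ord i -> pos (Some (existT _ i j)) = (pre l i).+1 + j.
Proof.
move=> Hi; rewrite /pos /=.
have -> : (i == a) = false by apply/negbTE; apply/eqP => H; move: Hi; rewrite H Ha0.
case Hib: (i == b).
  have Hv : nat_of_ord i = 1 by rewrite (eqP Hib).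
  have H1 : pre l 1 = l a.
    have := pre_S l a; rewrite Ha0 pre0 => ->; by [].
  rewrite Hv H1; lia.
rewrite HPd //; by rewrite /app Hib andbT; apply/negP => /eqP H; move: Hi; rewrite H Ha0.
Qed.

Lemma H1_big (Hm : 4 <= m) (Ha0 : nat_of_ord a = 0) (Hb1 : nat_of_ord b = 1)
  (HPd : forall i, app i -> P i = (pre l i).+1)
  (Hs : forall i j : 'I_m, i <= j -> l i <= l j) x : w x = 1 ->
  #|[set y | (pos y %/ k == pos x %/ k) && (1 <= w y)]| <= m.
Proof.
move=> Hwx.
set C := Cx x.
have C0 : 0 < C by apply: L3; rewrite Hwx.
have Ck := Cx_ge C0.
set S1 := [set y | _ && _].
set CH := [set y | pos y %/ k == pos x %/ k].
have cardCH : #|CH| <= k.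
  apply: leq_trans (card_pos (s := iota C k) _) _; last by rewrite size_iota.
  move=> y Hy; rewrite mem_iota; exact: chunk_bounds.
have sS1 : S1 \subset CH by apply/subsetP => y; rewrite !inE => /andP [].
case: (boolP [exists z, (z \in CH) && (w z == 0)]) => [/existsP [z /andP [Hz /eqP Hwz]] | Hall].
  have sub : S1 \subset CH :\ z.
    apply/subsetP => y; rewrite !inE => /andP [Hy Hwy]; rewrite Hy andbT.
    by apply/eqP => Hyz; move: Hwy; rewrite Hyz Hwz.
  have := subset_leq_card sub; have := cardsD1 z CH; rewrite Hz.
  rewrite /k in cardCH; lia.
have Hall' z : z \in CH -> 1 <= w z.
  move=> Hz; move: Hall; rewrite negb_exists => /forallP /(_ z); rewrite Hz /=; lia.
case: (leqP #|S1| m) => // Hbig; exfalso.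
have [z /andP [Hz Hpz]] : exists z, (z \in S1) && (C + m <= pos z).
  apply/existsP; apply: contraT => Hn.
  have : #|S1| <= m.
    apply: leq_trans (card_pos (s := iota C m) _) _; last by rewrite size_iota.
    move=> y Hy; have Hy' : y \in S1 by rewrite inE.
    have := Hn; rewrite negb_exists => /forallP /(_ y); rewrite Hy' /= -ltnNge => Hy2.
    rewrite mem_iota; move: Hy; move=> /andP [Hc _].
    have := chunk_bounds Hc; lia.
  lia.
have HzC : z \in CH by apply: (subsetP sS1).
have /andP [Hz1 Hz2] : C <= pos z < C + k by apply: chunk_bounds; move: HzC; rewrite inE.
have HST : appS z || appT z.
  apply/negPn/negP; rewrite negb_or => /andP [HS HT].
  have := L1 (Hall' z HzC) HS HT; rewrite (chunk_Cx (x := x)) -/C; last by move: HzC; rewrite inE.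
  rewrite /k in Hz2; lia.
have [i [j0 [Hz' Hi Hj0 Hp]]] := appST_shape HST.
have Hj0' : nat_of_ord j0 <= 1 := Hj0.
have Hpi := HPd i Hi.
have Hi2 : 2 <= nat_of_ord i.
  move: Hi; rewrite /app => /andP [Hia Hib].
  have : nat_of_ord i != nat_of_ord a by [].
  have : nat_of_ord i != nat_of_ord b by [].
  rewrite Ha0 Hb1; lia.
have Hi1m : (nat_of_ord i).-1 < m by apply: leq_ltn_trans (leq_pred _) (ltn_ord i).
pose i1 : 'I_m := Ordinal Hi1m.
have prei : pre l i = pre l i1 + l i1.
  rewrite -pre_S /i1 /=; congr (pre l _); lia.
case: (leqP 3 (l i1)) => Hli1.
- have Hj : (l i1).-1 < l i1 by rewrite ltn_predL; apply: Hl.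
  pose y : V := Some (existT _ i1 (Ordinal Hj)).
  have Hpy : pos y = (pre l i1).+1 + (l i1).-1 by apply: pos_big => //=; lia.
  have HyCH : y \in CH.
    rewrite inE; apply/eqP; apply: chunk_of_bounds.
    rewrite Hpy; rewrite /k in Hz2; lia.
  have := Hall' y HyCH.
  have HSy : appS y = false.
    rewrite /=; have -> : ((l i1).-1 == 0) = false by apply/eqP; lia.
    by rewrite andbF.
  have HTy : appT y = false.
    rewrite /=; have -> : ((l i1).-1 == 1) = false by apply/eqP; lia.
    by rewrite andbF.
  rewrite /w HSy HTy (chunk_Cx (x := x)) -/C; last by move: HyCH; rewrite inE.
  rewrite Hpy; lia.
- have Hle2 (j : 'I_m) : j < i -> l j <= 2.
    move=> Hji; apply: leq_trans (Hs j i1 _) _ => /=; lia.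
  have : pre l i <= 2 * (m.-1).
    apply: (@leq_trans (\sum_(j < m | j < i) 2)); first by apply: leq_sum => j; apply: Hle2.
    rewrite (eq_bigl (fun j => j \in [pred j : 'I_m | j < i])) // sum_nat_const.
    rewrite mulnC leq_mul2l /=.
    have -> : m.-1 = #|[set~ i]| by rewrite cardsC1 card_ord.
    apply: subset_leq_card; apply/subsetP => j; rewrite !inE => Hj.
    by apply/eqP => Hji; rewrite Hji ltnn in Hj.
  rewrite /k in Ck; lia.
Qed.


Lemma H2_three (Hm3 : m = 3) (HPc : forall i, app i -> P i = (l a + l b).+1) x : w x = 2 ->
  #|[set y | (pos y %/ k == pos x %/ k) && (2 <= w y)]| <= m.-1.
Proof.
move=> Hwx; apply: (@leq_trans 2); last by rewrite Hm3.
apply: (card_pos (s := [:: Cx x; (l a + l b).+1])) => y /andP [Hy Hwy].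
case HS: (appS y).
  have HST : appS y || appT y by rewrite HS.
  have [i [j [Hyij Hi Hj Hp]]] := appST_shape HST.
  have Hj0 : nat_of_ord j = 0 by move: HS; rewrite Hyij /= => /andP [_ /eqP].
  by rewrite Hp (HPc i Hi) Hj0 addn0 !inE eqxx orbT.
have := L2 Hwy (negbT HS); rewrite (chunk_Cx Hy) => ->.
by rewrite inE eqxx.
Qed.

Lemma H1_three (Hm3 : m = 3) (HPc : forall i, app i -> P i = (l a + l b).+1)
  (Hmod : (l a + l b).+1 %% 4 != 2) x : w x = 1 ->
  #|[set y | (pos y %/ k == pos x %/ k) && (1 <= w y)]| <= m.
Proof.
move=> Hwx.
set C := Cx x.
set Pc := (l a + l b).+1.
have HC4 : C %% 4 = 0 by rewrite /C /Cx /k Hm3 modnMl.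
have Hmem y : (pos y %/ k == pos x %/ k) && (1 <= w y) ->
    C <= pos y < C + 4 /\ (pos y <= C.+1 \/ pos y = Pc \/ pos y = Pc.+1).
  move=> /andP [Hy Hwy]; split; first by have := chunk_bounds Hy; rewrite /k Hm3.
  case HST : (appS y || appT y).
    have [i [j [Hyij Hi Hj Hp]]] := appST_shape HST.
    have Hj' : nat_of_ord j <= 1 := Hj.
    right; rewrite Hp (HPc i Hi); rewrite -/Pc; lia.
  left; move: HST => /negbT; rewrite negb_or => /andP [HS HT].
  have := L1 Hwy HS HT; by rewrite (chunk_Cx Hy).
apply: (@leq_trans 3); last by rewrite Hm3.
case: (leqP Pc C.+1) => HP1'.
  apply: (card_pos (s := [:: C; C.+1; C.+2])) => y /Hmem [H1 H2]; rewrite !inE; lia.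
case: (eqVneq Pc C.+3) => HP3'.
  apply: (card_pos (s := [:: C; C.+1; C.+3])) => y /Hmem [H1 H2]; rewrite !inE; lia.
apply: leq_trans (card_pos (s := [:: C; C.+1]) _) _ => // y /Hmem [H1 H2]; rewrite !inE; lia.
Qed.

Lemma spider_main
  (H1 : forall x, w x = 1 -> #|[set y | (pos y %/ k == pos x %/ k) && (1 <= w y)]| <= m)
  (H2 : forall x, w x = 2 -> #|[set y | (pos y %/ k == pos x %/ k) && (2 <= w y)]| <= m.-1) :
  equitably_choosable E k.
Proof.
apply: (@GL _ _ _ (ceil_div #|V| k) (fun x => pos x %/ k) w).
- exact: E_irr.
- move=> x; rewrite ltn_divLR // /ceil_div /k /=.
  have Hp := pos_lt x.
  have : #|V| + m < ((#|V| + m) %/ m.+1).+1 * m.+1 by rewrite -ltn_divLR.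
  rewrite mulSn; lia.
- exact: leqnn.
- exact: out_le_w.
- exact: Hb_of.
Qed.
End Pos.

Section Final.
Variables (m : nat) (l : 'I_m -> nat).
Hypothesis Hl : forall i, 0 < l i.

Lemma three_case (a b c : 'I_m) : a != b -> c != a -> c != b ->
  (forall i, i = a \/ i = b \/ i = c) -> m = 3 -> (l a + l b).+1 %% 4 != 2 ->
  equitably_choosable (graph_sq (@Bedge m l)) m.+1.
Proof.
move=> Hab Hca Hcb Hall Hm3 Hmod.
have Happ i : app a b i -> i = c.
  rewrite /app => /andP [Ha Hb]; case: (Hall i) => [Hi|[Hi|Hi]] //.
  - by rewrite Hi eqxx in Ha.
  - by rewrite Hi eqxx in Hb.
pose P := fun _ : 'I_m => (l a + l b).+1.
have HPc : forall i, app a b i -> P i = (l a + l b).+1 by [].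
have HP1 : forall i, app a b i -> l a + l b < P i by move=> i _ /=.
have HP2 : forall i i', app a b i -> app a b i' -> i < i' -> P i + l i <= P i'.
  move=> i i' /Happ -> /Happ ->; by rewrite ltnn.
have HP3 : forall i, app a b i -> P i + l i <= (\sum_(i < m) l i).+1.
  move=> i /Happ ->.
  rewrite (sum_ab _ Hab).
  have Hc : app a b c by rewrite /app Hca Hcb.
  rewrite (bigD1 c) //= /P; lia.
apply: (spider_main Hab Hl HP1 HP2 HP3).
- move=> x Hx; exact: (H1_three Hab Hl HP1 HP2 Hm3 HPc Hmod Hx).
- move=> x Hx; exact: (H2_three Hab Hl HP1 HP2 Hm3 HPc Hx).
Qed.

Hypothesis Hs : forall i j : 'I_m, i <= j -> l i <= l j.

Lemma big_case (Hm : 4 <= m) : equitably_choosable (graph_sq (@Bedge m l)) m.+1.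
Proof.
have h0 : 0 < m by lia.
have h1 : 1 < m by lia.
pose a : 'I_m := Ordinal h0.
pose b : 'I_m := Ordinal h1.
have Hab : a != b by [].
have pre1 : pre l 1 = l a by have := pre_S l a; rewrite pre0 => ->.
have pre2 : pre l 2 = l a + l b by have := pre_S l b; rewrite pre1 => ->.
pose P := fun i : 'I_m => (pre l i).+1.
have HP1 : forall i, app a b i -> l a + l b < P i.
  move=> i; rewrite /app => /andP [Ha Hb].
  have Hi2 : 2 <= i.
    have : nat_of_ord i != 0 by move: Ha; apply: contra => /eqP H; apply/eqP; apply: val_inj.
    have : nat_of_ord i != 1 by move: Hb; apply: contra => /eqP H; apply/eqP; apply: val_inj.
    lia.
  have := pre_mono l Hi2; rewrite pre2 /P; lia.
have HP2 : forall i i', app a b i -> app a b i' -> i < i' -> P i + l i <= P i'.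
  move=> i i' _ _ Hii'; have := pre_le l Hii'; rewrite /P; lia.
have HP3 : forall i, app a b i -> P i + l i <= (\sum_(i < m) l i).+1.
  move=> i _; have := pre_le l (ltn_ord i); rewrite pre_all /P; lia.
have HPd : forall i, app a b i -> P i = (pre l i).+1 by [].
apply: (spider_main Hab Hl HP1 HP2 HP3).
- move=> x Hx; exact: (H1_big Hab Hl HP1 HP2 Hm (erefl _) (erefl _) HPd Hs Hx).
- move=> x Hx; apply: (H2_big Hab Hl HP1 HP2 _ _ Hx); [lia | by apply: Hs].
Qed.
End Final.

Unset Implicit Arguments.
Theorem lemma2p8 (m : nat) (l : 'I_m -> nat) :
  3 <= m ->
  (forall i, 0 < l i) ->
  (forall i j : 'I_m, i <= j -> l i <= l j) ->
  equitably_choosable (graph_sq (@Bedge m l)) m.+1.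
Proof.
move=> Hm Hl Hs.
case: (ltnP 3 m) => Hm4; first exact: big_case.
have Hm3 : m = 3 by lia.
have h0 : 0 < m by lia.
have h1 : 1 < m by lia.
have h2 : 2 < m by lia.
pose o0 : 'I_m := Ordinal h0.
pose o1 : 'I_m := Ordinal h1.
pose o2 : 'I_m := Ordinal h2.
have Hall i : i = o0 \/ i = o1 \/ i = o2.
  have := ltn_ord i; rewrite {2}Hm3 => Hi.
  have : nat_of_ord i = 0 \/ nat_of_ord i = 1 \/ nat_of_ord i = 2 by lia.
  by case=> [H|[H|H]]; [left|right;left|right;right]; apply: val_inj.
have n01 : o0 != o1 by []. have n02 : o0 != o2 by []. have n12 : o1 != o2 by [].
have n10 : o2 != o0 by []. have n20 : o1 != o0 by []. have n21 : o1 != o2 by [].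
have n2 : o2 != o1 by []. have n0 : o0 != o1 by [].
have A1 i : i = o0 \/ i = o1 \/ i = o2 by case: (Hall i) => [->|[->|->]]; tauto.
have A2 i : i = o0 \/ i = o2 \/ i = o1 by case: (Hall i) => [->|[->|->]]; tauto.
have A3 i : i = o1 \/ i = o2 \/ i = o0 by case: (Hall i) => [->|[->|->]]; tauto.
case: (eqVneq ((l o0 + l o1).+1 %% 4) 2) => H01; last first.
  exact: (three_case Hl n01 n10 n12 A1 Hm3 H01).
case: (eqVneq ((l o0 + l o2).+1 %% 4) 2) => H02; last first.
  exact: (three_case Hl n02 n20 n2 A2 Hm3 H02).
case: (eqVneq ((l o1 + l o2).+1 %% 4) 2) => H12; last first.
  have n02' : o0 != o2 by [].
  exact: (three_case Hl n12 (c := o0) n0 n02' A3 Hm3 H12).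
exfalso; move: H01 H02 H12; lia.
Qed.
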